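(* Let $G$ be a graph with no isolated vertices such that $\mathcal{Z}^{\mathrm{TE}}_+(G)\cong K_n$. Then either $G\cong K_n$, or $G$ is a tree on $n$ vertices.
   Context: PSD forcing: vertices are colored blue or white; if $B$ is the current set of blue vertices, $C$ a connected component of $G-B$, and $u$ a blue vertex with $N_G(u)\cap V(C)=\{v\}$, then $u$ may force $v$ to become blue. A PSD forcing set is a set of initially blue vertices from which repeated application of this rule turns every vertex blue; $\mathrm{Z}_+(G)$ is the minimum size of a PSD forcing set. $\mathcal{Z}^{\mathrm{TE}}_+(G)$ has as vertices the minimum PSD forcing sets of $G$, with $S_1S_2$ an edge iff $S_1\setminus S_2=\{v_1\}$ and $S_2\setminus S_1=\{v_2\}$ for some vertices $v_1,v_2$. *)

(* Defs.v *)
From mathcomp Require Import all_boot.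
Set Implicit Arguments. Unset Strict Implicit. Unset Printing Implicit Defensive.

(* A finite simple graph: vertex type T : finType, adjacency g : rel T,
   assumed symmetric and irreflexive (hypotheses of the theorem). *)

Section PSD.
Variables (T : finType) (g : rel T).

Definition restr (B : {set T}) : rel T :=
  [rel x y | [&& x \notin B, y \notin B & g x y]].

Definition comp (B : {set T}) (v : T) : {set T} :=
  [set w | (v \notin B) && (w \notin B) && connect (restr B) v w].

Definition psd_force (B : {set T}) (u v : T) : Prop :=
  u \in B /\ v \notin B /\
  [set w in comp B v | g u w] = [set v].

Inductive psd_reach (S : {set T}) : {set T} -> Prop :=
| psd_reach_init : psd_reach S S
| psd_reach_step B u v : psd_reach S B -> psd_force B u v -> psd_reach S (v |: B).

Definition psd_forcing_set (S : {set T}) : Prop := psd_reach S [set: T].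

(* minimum PSD forcing set: its size is Z_+(G) *)
Definition min_psd_forcing_set (S : {set T}) : Prop :=
  psd_forcing_set S /\ forall S', psd_forcing_set S' -> #|S| <= #|S'|.

Definition te_adj (S1 S2 : {set T}) : Prop :=
  (exists v1, S1 :\: S2 = [set v1]) /\ (exists v2, S2 :\: S1 = [set v2]).

(* Z^TE_+(G) is isomorphic to K_n, K_n having vertex set 'I_n and
   edges i j for i != j: a bijection f from 'I_n onto the set of minimum
   PSD forcing sets preserving and reflecting adjacency. *)
Definition TE_iso_complete (n : nat) : Prop :=
  exists f : 'I_n -> {set T},
    injective f /\
    (forall i, min_psd_forcing_set (f i)) /\
    (forall S, min_psd_forcing_set S -> exists i, f i = S) /\
    (forall i j, te_adj (f i) (f j) <-> i != j).

Definition no_isolated : Prop := forall x, exists y, g x y.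

Definition connected_graph : Prop := forall x y, connect g x y.

Definition acyclic_graph : Prop :=
  forall c : seq T, uniq c -> 3 <= size c -> ~~ cycle g c.

Definition is_tree : Prop := connected_graph /\ acyclic_graph.

End PSD.

Definition complete_rel n : rel 'I_n := fun i j => i != j.

Definition graph_iso (T1 T2 : finType) (e1 : rel T1) (e2 : rel T2) : Prop :=
  exists f : T1 -> T2, bijective f /\ forall x y, e1 x y = e2 (f x) (f y).
Arguments complete_rel n : clear implicits.

(* Main.v *)
From Pilot Require Import Defs.
From mathcomp Require Import all_boot.
From mathcomp Require Import zify.
From Stdlib Require Import Classical.
Set Implicit Arguments. Unset Strict Implicit. Unset Printing Implicit Defensive.

Lemma connect_restrict (T : finType) (e e' : rel T) (A : pred T) x z :
  (forall a b, A a -> e a b -> A b && e' a b) -> A x -> connect e x z ->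
  connect e' x z && A z.
Proof.
move=> hA Ax /connectP [p pth ->] {z}.
elim: p x Ax pth => [|y p IH] x Ax /=; first by rewrite connect0 Ax.
case/andP=> exy pth; case/andP: (hA _ _ Ax exy) => Ay e'xy.
case/andP: (IH y Ay pth) => c1 c2; rewrite c2 andbT.
exact: connect_trans (connect1 e'xy) c1.
Qed.

Section PSD.
Variables (T : finType) (g : rel T).
Hypotheses (gsym : symmetric g) (girr : irreflexive g).
Implicit Types (B S X C P Q : {set T}) (u v w x y z : T).

Local Notation cmp := (Pilot.Defs.comp g).
Local Notation rs := (restr g).
Local Notation force := (psd_force g).
Local Notation reach := (psd_reach g).

Lemma rs_sym B : symmetric (rs B).
Proof. by move=> x y; rewrite /restr /= gsym andbCA. Qed.

Lemma rs_csym B x y : connect (rs B) x y = connect (rs B) y x.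
Proof. exact: (sym_connect_sym (rs_sym B)). Qed.

Lemma in_cmp B v w : (w \in cmp B v) = [&& v \notin B, w \notin B & connect (rs B) v w].
Proof. by rewrite /Pilot.Defs.comp inE andbA. Qed.

Lemma cmp_self B v : v \notin B -> v \in cmp B v.
Proof. by move=> hv; rewrite in_cmp hv connect0. Qed.

Lemma cmp_mono B B' v : B \subset B' -> cmp B' v \subset cmp B v.
Proof.
move=> sBB'; apply/subsetP=> w; rewrite !in_cmp => /and3P[hv hw c].
have nB : forall x, x \notin B' -> x \notin B.
  by move=> x; apply: contra; apply: (subsetP sBB').
rewrite (nB _ hv) (nB _ hw) /=.
have hA : forall a b, predT a -> rs B' a b -> predT b && rs B a b.
  move=> a b _; rewrite /restr /= => /and3P[ha hb ->].
  by rewrite (nB _ ha) (nB _ hb).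
by case/andP: (connect_restrict hA isT c).
Qed.

Lemma cmp_sub B B' y : y \notin B -> y \notin B' ->
  (forall z z', z \in cmp B y -> g z z' -> z' \notin B' -> z' \notin B) ->
  cmp B' y \subset cmp B y.
Proof.
move=> yB yB' hyp; apply/subsetP=> w; rewrite in_cmp => /and3P[_ wB' c].
have hA : forall a b, [pred x | x \in cmp B y] a -> rs B' a b ->
    [pred x | x \in cmp B y] b && rs B a b.
  move=> a b /= ha; rewrite /restr /= => /and3P[aB' bB' gab].
  have bB := hyp _ _ ha gab bB'.
  move: ha; rewrite !in_cmp => /and3P[-> aB c'] /=; rewrite bB aB gab /= andbT.
  by apply: connect_trans c' (connect1 _); rewrite /restr /= aB bB gab.
by case/andP: (connect_restrict hA (cmp_self yB) c).
Qed.

Lemma cmp_trans B v w z : w \in cmp B v -> z \in cmp B w -> z \in cmp B v.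
Proof.
rewrite !in_cmp => /and3P[-> _ c1] /and3P[_ -> c2] /=.
exact: connect_trans c1 c2.
Qed.

Lemma cmp_symm B v w : w \in cmp B v -> v \in cmp B w.
Proof. by rewrite !in_cmp rs_csym => /and3P[-> -> ->]. Qed.

Lemma force_adj B u v : force B u v -> [/\ u \in B, v \notin B & g u v].
Proof.
case=> uB [vB E]; split=> //.
have : v \in [set w in cmp B v | g u w] by rewrite E set11.
by rewrite inE => /andP[].
Qed.

Lemma force_mono B B' u v : force B u v -> B \subset B' -> v \notin B' -> force B' u v.
Proof.
move=> F sBB' vB'; have [uB vB guv] := force_adj F.
case: F => _ [_ E]; split; first exact: (subsetP sBB').
split=> //; apply/setP=> w; rewrite inE in_set1.
case: eqP => [->|/eqP nwv]; first by rewrite cmp_self.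
apply/negbTE/negP=> /andP[hw guw].
have : w \in [set w in cmp B v | g u w].
  by rewrite inE guw (subsetP (cmp_mono v sBB')).
by rewrite E in_set1 (negbTE nwv).
Qed.

Lemma reach_sub S B : reach S B -> S \subset B.
Proof.
elim=> [|B0 u v _ IH _]; first exact: subxx.
by apply: subset_trans IH _; apply: subsetUr.
Qed.

Lemma reach_mono S B S' : reach S B -> S \subset S' -> reach S' (B :|: S').
Proof.
move=> R sSS'; elim: R => [|B0 u v R IH F].
  by rewrite (setUidPr sSS'); constructor.
case: (boolP (v \in B0 :|: S')) => hv.
  by rewrite -setUA (setUidPr _) // sub1set.
rewrite -setUA; apply: psd_reach_step IH _.
by apply: force_mono F (subsetUl _ _) hv.
Qed.

Lemma reach_trans S B C : reach S B -> reach B C -> reach S C.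
Proof. by move=> R1; elim=> // B0 u v _ IH F; apply: psd_reach_step IH F. Qed.

Lemma forcing_sup S S' X : psd_forcing_set g S -> reach S' X -> S \subset X ->
  psd_forcing_set g S'.
Proof.
move=> FS R sSX; apply: reach_trans R _.
have := reach_mono FS sSX; rewrite (setUidPl (subsetT _)) //.
Qed.

Lemma reach_first S B : reach S B ->
  B = S \/ exists u w, force S u w /\ reach (w |: S) B.
Proof.
elim=> [|B0 u v R IH F]; first by left.
right; case: IH => [E|[u' [w [F' R']]]].
  by subst B0; exists u, v; split=> //; constructor.
by exists u', w; split=> //; apply: psd_reach_step R' F.
Qed.


Lemma swap_reach S a b : force S a b -> reach ((b |: S) :\ a) (b |: S).
Proof.
move=> F; have [aS bS gab] := force_adj F.
have nab : a != b by apply: contraNneq bS => <-.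
set S' := (b |: S) :\ a.
have aS' : a \notin S' by rewrite !inE eqxx.
have bS' : b \in S' by rewrite !inE eq_sym nab eqxx.
have -> : b |: S = a |: S' by rewrite /S' setD1K // !inE aS orbT.
apply: (@psd_reach_step _ g S' S' b a (psd_reach_init _ _)).
split=> //; split=> //.
case: F => _ [_ E].
apply/setP=> w; rewrite inE in_set1.
case: eqP => [->|/eqP nwa]; first by rewrite cmp_self // gsym gab.
apply/negbTE/negP=> /andP[hw gbw].
have wS' : w \notin S' by move: hw; rewrite in_cmp => /and3P[].
have wS : w \notin S by move: wS'; rewrite !inE negb_and negb_or nwa /= => /andP[].
have nwb : w != b by apply: contraNneq wS' => ->.
have wD : w \in cmp S b.
  rewrite in_cmp bS wS /=; apply: connect1; by rewrite /restr /= bS wS gbw.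
pose A := [pred x | (x == a) || ((x \notin S) && (x \notin cmp S b))].
have hA : forall x z, A x -> rs S' x z -> A z && true.
  move=> x z; rewrite /A /= andbT /restr /= => hx /and3P[xS' zS' gxz].
  case: (z =P a) => // /eqP nza /=.
  have zS : z \notin S by move: zS'; rewrite !inE negb_and negb_or nza /= => /andP[].
  rewrite zS /=.
  case/orP: hx => [/eqP xa|/andP[xS xD]].
  - subst x; apply/negP=> zD.
    have : z \in [set w in cmp S b | g a w] by rewrite inE zD gxz.
    rewrite E in_set1 => /eqP zb; by move: zS'; rewrite zb bS'.
  - apply: contra xD => zD; apply: cmp_trans zD _.
    rewrite in_cmp zS xS /=; apply: connect1; by rewrite /restr /= zS xS gsym gxz.
have Aa : A a by rewrite /A /= eqxx.
move: hw; rewrite in_cmp => /and3P[_ _ c].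
case/andP: (connect_restrict hA Aa c) => _.
by rewrite /A /= (negbTE nwa) wS wD.
Qed.

Lemma swap_forcing S a b : psd_forcing_set g S -> force S a b ->
  psd_forcing_set g ((b |: S) :\ a).
Proof. by move=> FS F; apply: forcing_sup FS (swap_reach F) (subsetUr _ _). Qed.

Lemma swap_card S a b : force S a b -> #|(b |: S) :\ a| = #|S|.
Proof.
move=> F; have [aS bS _] := force_adj F.
have nab : a != b by apply: contraNneq bS => <-.
have := cardsD1 a (b |: S); rewrite !inE aS orbT /= add1n.
by rewrite cardsU1 bS add1n => -[].
Qed.

Section Restr.
Variables (S : {set T}) (b : T).
Hypothesis bS : b \notin S.
Local Notation D := (cmp S b).

Lemma restr_cmp B y : S \subset B -> y \in D -> y \notin B ->
  cmp (S :|: (B :&: D)) y = cmp B y.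
Proof.
move=> sSB yD yB; apply/eqP; rewrite eqEsubset; apply/andP; split; last first.
  by apply: cmp_mono; rewrite subUset sSB subIset ?subxx.
have yS : y \notin S by exact: contra (subsetP sSB y) yB.
apply: cmp_sub => //.
  by rewrite !inE negb_or yS negb_and yB.
move=> z z' hz gzz'; rewrite in_setU in_setI negb_or negb_and => /andP[z'S H].
have zD : z \in D.
  apply: cmp_trans yD _; apply: subsetP hz; exact: cmp_mono.
have zS : z \notin S by move: zD; rewrite in_cmp => /and3P[].
have z'D : z' \in D.
  apply: cmp_trans zD _; rewrite in_cmp zS z'S /=.
  by apply: connect1; rewrite /restr /= zS z'S gzz'.
by move: H; rewrite z'D orbF.
Qed.

Lemma restr_force B u y : S \subset B -> y \in D -> force B u y ->
  force (S :|: (B :&: D)) u y.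
Proof.
move=> sSB yD F; have [uB yB guy] := force_adj F.
case: F => _ [_ E]; split.
  rewrite in_setU in_setI uB /=; case: (boolP (u \in S)) => //= uS.
  have yS : y \notin S by move: yD; rewrite in_cmp => /and3P[].
  apply: (cmp_trans yD).
  rewrite in_cmp uS yS /=.
  by apply: connect1; rewrite /restr /= yS uS gsym guy.
split.
  rewrite in_setU in_setI negb_or negb_and yB /= andbT.
  exact: contra (subsetP sSB y) yB.
by rewrite restr_cmp.
Qed.

Lemma restr_reach B : reach S B -> reach S (S :|: (B :&: D)).
Proof.
elim=> [|B0 u y R IH F].
  by rewrite (setUidPl _) ?subIset ?subxx //; constructor.
have sSB0 := reach_sub R.
case: (boolP (y \in D)) => yD.
  have -> : S :|: ((y |: B0) :&: D) = y |: (S :|: (B0 :&: D)).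
    apply/setP=> z; rewrite ?(in_setU, in_setI, in_set1).
    by case: (z =P y) => [->|_]; rewrite ?yD ?orbT.
  exact: (psd_reach_step IH (restr_force sSB0 yD F)).
have -> : S :|: ((y |: B0) :&: D) = S :|: (B0 :&: D).
  apply/setP=> z; rewrite ?(in_setU, in_setI, in_set1).
  by case: (z =P y) => [->|_]; rewrite ?(negbTE yD) ?andbF.
exact: IH.
Qed.
End Restr.

Section Transport.
Variables (S : {set T}) (b s1 w1 : T).
Hypotheses (bS : b \notin S) (s1S : s1 \in S) (w1D : w1 \in cmp S b)
  (hN : forall z, z \in cmp S b -> g s1 z -> z = w1).
Local Notation D := (cmp S b).

Lemma force_del Q u y : S \subset Q -> w1 \in Q -> y \in D -> force Q u y ->
  force (Q :\ s1) u y.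
Proof.
move=> sSQ w1Q yD F; have [uQ yQ guy] := force_adj F.
have nyw : y != w1 by apply: contraNneq yQ => ->.
have nus : u != s1.
  by apply/eqP=> us; subst u; move/eqP: nyw; apply; apply: hN.
have yQ' : y \notin Q :\ s1 by rewrite in_setD1 negb_and yQ orbT.
case: F => _ [_ E]; split; first by rewrite in_setD1 nus.
split=> //.
suff -> : cmp (Q :\ s1) y = cmp Q y by [].
apply/eqP; rewrite eqEsubset; apply/andP; split; last first.
  by apply: cmp_mono; apply: subD1set.
apply: cmp_sub => // z z' hz gzz'.
rewrite in_setD1 negb_and negbK => /orP[/eqP zs|//].
subst z'; exfalso.
have zD : z \in D.
  apply: (cmp_trans yD); apply: subsetP hz; exact: cmp_mono.
have := hN zD; rewrite gsym => /(_ gzz') zw.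
by move: hz; rewrite in_cmp zw w1Q andbF.
Qed.

Lemma transport P Q : reach P Q -> w1 |: S \subset P -> Q \subset S :|: D ->
  reach (P :\ s1) (Q :\ s1).
Proof.
move=> R sP; elim: R => [|Q0 u y R IH F] sQ; first by constructor.
have sQ0 : Q0 \subset S :|: D by apply: subset_trans sQ; apply: subsetUr.
have sPQ0 := reach_sub R.
have w1Q0 : w1 \in Q0 by apply: (subsetP sPQ0); apply: (subsetP sP); rewrite in_setU1 eqxx.
have sSQ0 : S \subset Q0 by apply: subset_trans sPQ0; apply: subset_trans sP; apply: subsetUr.
have [_ yQ0 _] := force_adj F.
have yS : y \notin S by exact: contra (subsetP sSQ0 y) yQ0.
have yD : y \in D.
  have : y \in S :|: D by apply: (subsetP sQ); rewrite in_setU1 eqxx.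
  by rewrite in_setU (negbTE yS).
have nys : y != s1 by apply: contraNneq yS => ->.
have -> : (y |: Q0) :\ s1 = y |: (Q0 :\ s1).
  apply/setP=> z; rewrite ?(in_setD1, in_setU1).
  by case: (z =P y) => [->|]; rewrite ?nys.
exact: (psd_reach_step (IH sQ0) (force_del sSQ0 w1Q0 yD F)).
Qed.
End Transport.

Lemma lemG m : forall S B a b, #|B :\: S| < m -> reach S B -> force B a b ->
  exists S2, [/\ #|S2| = #|S|, force S2 a b & exists X, reach S2 X /\ S \subset X].
Proof.
elim: m => [//|m IH] S B a b hm R F.
have [aB bB gab] := force_adj F.
have sSB := reach_sub R.
have bS : b \notin S by exact: contra (subsetP sSB b) bB.
pose D := cmp S b.
have R' := restr_reach b R.
have F' := restr_force sSB (cmp_self bS) F.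
case: (reach_first R') => [E|[s1 [w1 [F1 R1]]]].
  rewrite E in F'; exists S; split=> //; exists S; split; [constructor | exact: subxx].
have [s1S w1S gsw] := force_adj F1.
have w1B' : w1 \in S :|: (B :&: D).
  by apply: (subsetP (reach_sub R1)); rewrite in_setU1 eqxx.
have w1D : w1 \in D by move: w1B'; rewrite in_setU in_setI (negbTE w1S) => /andP[].
have w1B : w1 \in B by move: w1B'; rewrite in_setU in_setI (negbTE w1S) => /andP[].
have hN : forall z, z \in D -> g s1 z -> z = w1.
  move=> z zD gz.
  have zw : z \in cmp S w1 by apply: cmp_trans (cmp_symm w1D) zD.
  case: F1 => _ [_ E].
  have : z \in [set w in cmp S w1 | g s1 w] by rewrite inE zw gz.
  by rewrite E in_set1 => /eqP.
have sBD : S :|: (B :&: D) \subset S :|: D.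
  by apply: setUS; apply: subsetIr.
have Rt := transport s1S hN R1 (subxx _) sBD.
have F2 := force_del hN (subsetUl _ _) w1B' (cmp_self bS) F'.
have hm' : #|((S :|: (B :&: D)) :\ s1) :\: ((w1 |: S) :\ s1)| < m.
  have sub : ((S :|: (B :&: D)) :\ s1) :\: ((w1 |: S) :\ s1) \subset (B :\: S) :\ w1.
    apply/subsetP=> z; rewrite ?(in_setD, in_setD1, in_setU1, in_setU, in_setI, in_set1).
    by case: (z == s1); case: (z == w1); case: (z \in S); case: (z \in B); case: (z \in D).
  apply: leq_ltn_trans (subset_leq_card sub) _.
  have := cardsD1 w1 (B :\: S); rewrite in_setD w1S w1B /= add1n => E.
  by move: hm; rewrite E ltnS.
have [S2 [c2 f2 [X [RX sX]]]] := IH _ _ _ _ hm' Rt F2.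
exists S2; split=> //; first by rewrite c2 (swap_card F1).
exists ((w1 |: S) :|: X); split.
  apply: reach_trans RX _; exact: reach_mono (swap_reach F1) sX.
by apply: subset_trans (subsetUl _ _); apply: subsetUr.
Qed.

Lemma single_force B u v : u \in B -> v \notin B -> g u v ->
  (forall z, z \notin B -> z != v -> ~~ g v z) -> force B u v.
Proof.
move=> uB vB guv hz; split=> //; split=> //.
apply/setP=> w; rewrite inE in_set1.
case: eqP => [->|/eqP nwv]; first by rewrite cmp_self.
apply/negbTE/negP=> /andP[hw _].
move: hw; rewrite in_cmp => /and3P[_ _ c].
have hA : forall a z, (pred1 v) a -> rs B a z -> (pred1 v) z && true.
  move=> a z /= /eqP -> {a}; rewrite /restr /= andbT => /and3P[_ zB gvz].
  by case: (z =P v) => // /eqP nzv; move: (hz z zB nzv); rewrite gvz.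
case/andP: (connect_restrict hA (eqxx v) c) => _ /= /eqP wv.
by move/eqP: nwv.
Qed.

Lemma lemma_A S v : psd_forcing_set g S -> v \notin S ->
  exists S', [/\ psd_forcing_set g S', #|S'| = #|S| & v \in S'].
Proof.
move=> FS vS.
have H : forall B, reach S B -> v \in B ->
    v \in S \/ exists B0 u, reach S B0 /\ force B0 u v.
  move=> B; elim=> [|B0 u y R IH F]; first by left.
  rewrite in_setU1; case: (v =P y) => [->|_ /= vB0]; last exact: IH.
  by move=> _; right; exists B0, u.
case: (H _ FS (in_setT v)) => [vS'|[B0 [u [R F]]]]; first by rewrite vS' in vS.
have [S2 [c2 F2 [X [RX sX]]]] := @lemG (#|B0 :\: S|).+1 _ _ _ _ (ltnSn _) R F.
have FS2 := forcing_sup FS RX sX.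
have [uS2 vS2 _] := force_adj F2.
exists ((v |: S2) :\ u); split.
- exact: swap_forcing.
- by rewrite (swap_card F2).
- by rewrite in_setD1 in_setU1 eqxx andbT; apply: contraNneq vS2 => ->.
Qed.

Lemma lemma_B S v : no_isolated g -> min_psd_forcing_set g S -> v \in S ->
  exists S', [/\ psd_forcing_set g S', #|S'| = #|S| & v \notin S'].
Proof.
move=> noiso [FS minS] vS.
case: (boolP [forall x, g v x ==> (x \in S)]) => [/forallP allS|].
  exfalso; have [y gvy] := noiso v.
  have yS : y \in S by move: (allS y); rewrite gvy.
  have nyv : y != v by apply: contraTneq gvy => ->; rewrite girr.
  have F : force (S :\ v) y v.
    apply: single_force.
    - by rewrite in_setD1 nyv.
    - by rewrite in_setD1 eqxx.
    - by rewrite gsym.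
    - move=> z; rewrite in_setD1 negb_and negbK => /orP[/eqP->|zS]; first by rewrite eqxx.
      move=> _; apply: contra zS => gvz; move: (allS z); rewrite gvz; exact.
  have R := psd_reach_step (psd_reach_init g (S :\ v)) F.
  rewrite setD1K // in R.
  have := minS _ (forcing_sup FS R (subxx _)).
  by rewrite (cardsD1 v S) vS add1n ltnn.
move=> /forallPn [x0]; rewrite negb_imply => /andP[gvx0 x0S].
have H : forall B, reach S B -> (forall x, g v x -> x \in B) ->
    (forall x, g v x -> x \in S) \/ exists B0 y, reach S B0 /\ force B0 v y.
  move=> B; elim=> [|B0 u y R IH F] hB; first by left.
  case: (boolP [forall x, g v x ==> (x \in B0)]) => [/forallP hB0|].
    by apply: IH => x gx; move: (hB0 x); rewrite gx.
  move=> /forallPn [x1]; rewrite negb_imply => /andP[gvx1 x1B0].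
  have := hB _ gvx1; rewrite in_setU1 (negbTE x1B0) orbF => /eqP ex1; subst x1.
  right; exists B0, y; split=> //.
  have [_ yB0 _] := force_adj F.
  split; first by apply: (subsetP (reach_sub R)).
  split=> //; apply/setP=> w; rewrite inE in_set1.
  case: eqP => [->|/eqP nwy]; first by rewrite cmp_self // gvx1.
  apply/negbTE/negP=> /andP[hw gvw].
  have := hB _ gvw; rewrite in_setU1 (negbTE nwy) /=.
  by move: hw; rewrite in_cmp => /and3P[_ /negbTE ->].
case: (H _ FS (fun x _ => in_setT x)) => [allS|[B0 [y [R F]]]].
  by move: x0S; rewrite allS.
have [S2 [c2 F2 [X [RX sX]]]] := @lemG (#|B0 :\: S|).+1 _ _ _ _ (ltnSn _) R F.
have FS2 := forcing_sup FS RX sX.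
exists ((y |: S2) :\ v); split.
- exact: swap_forcing.
- by rewrite (swap_card F2).
- by rewrite in_setD1 eqxx.
Qed.

Lemma ex_min : exists S, min_psd_forcing_set g S.
Proof.
suff H : forall m S, #|S| <= m -> psd_forcing_set g S -> exists S0, min_psd_forcing_set g S0.
  by apply: (H _ setT (leqnn _)); constructor.
elim=> [|m IH] S hS FS.
  by exists S; split=> // S' _; move: hS; rewrite leqn0 => /eqP->.
case: (classic (forall S', psd_forcing_set g S' -> #|S| <= #|S'|)) => [H|H].
  by exists S.
have [S' HS'] := not_all_ex_not _ _ H.
have [FS' lt] : psd_forcing_set g S' /\ #|S'| < #|S|.
  split; first by apply: NNPP => nF; apply: HS' => /nF.
  by rewrite ltnNge; apply/negP => le; apply: HS'.
by apply: (IH S') => //; rewrite -ltnS; apply: leq_trans lt hS.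
Qed.

Lemma complete_lb S : (forall x y, x != y -> g x y) -> psd_forcing_set g S ->
  #|~: S| <= 1.
Proof.
move=> cpl FS; rewrite leqNgt; apply/negP => h2.
have H : forall B, reach S B -> B = S.
  move=> B; elim=> // B0 u y R IH F; exfalso; subst B0.
  have [uS yS _] := force_adj F.
  have : 0 < #|(~: S) :\ y| by move: h2; rewrite (cardsD1 y (~: S)) in_setC yS add1n ltnS.
  move=> /card_gt0P [z]; rewrite in_setD1 in_setC => /andP[nzy zS].
  case: F => _ [_ E].
  have : z \in [set w in cmp S y | g u w].
    rewrite inE in_cmp yS zS /=; apply/andP; split.
      by apply: connect1; rewrite /restr /= yS zS /=; apply: cpl; rewrite eq_sym.
    by apply: cpl; apply: contraNneq zS => <-.
  by rewrite E in_set1 (negbTE nzy).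
by have E := H _ FS; move: h2; rewrite -E setCT cards0.
Qed.

Lemma compl_forcing y : no_isolated g -> psd_forcing_set g (~: [set y]).
Proof.
move=> noiso; have [u gyu] := noiso y.
have nuy : u != y by apply: contraTneq gyu => ->; rewrite girr.
have F : force (~: [set y]) u y.
  apply: single_force.
  - by rewrite in_setC in_set1.
  - by rewrite in_setC in_set1 eqxx.
  - by rewrite gsym.
  - by move=> z; rewrite in_setC in_set1 negbK => ->.
have R := psd_reach_step (psd_reach_init g _) F.
rewrite /psd_forcing_set; have -> : [set: T] = y |: ~: [set y].
  by apply/setP=> z; rewrite !inE; case: eqP.
exact: R.
Qed.

Lemma two_forcing x y : no_isolated g -> x != y -> ~~ g x y ->
  psd_forcing_set g (~: [set x; y]).
Proof.
move=> noiso nxy ngxy.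
have [u1 gx1] := noiso x; have [u2 gy2] := noiso y.
have F1 : force (~: [set x; y]) u1 x.
  apply: single_force.
  - rewrite !inE negb_or; apply/andP; split.
      by apply: contraTneq gx1 => ->; rewrite girr.
    by apply: contraTneq gx1 => ->; rewrite (negbTE ngxy).
  - by rewrite !inE eqxx.
  - by rewrite gsym.
  - move=> z; rewrite !inE negbK => /orP[->//|/eqP-> _].
    exact: ngxy.
have F2 : force (x |: ~: [set x; y]) u2 y.
  apply: single_force.
  - rewrite !inE; case: (u2 =P x) => //= _.
    by apply: contraTneq gy2 => ->; rewrite girr.
  - by rewrite !inE eqxx orbT /= eq_sym (negbTE nxy).
  - by rewrite gsym.
  - move=> w; rewrite !inE; case: (w =P x) => //= _.
    by case: (w =P y).
have R := psd_reach_step (psd_reach_step (psd_reach_init g _) F1) F2.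
rewrite /psd_forcing_set; have -> : [set: T] = y |: (x |: ~: [set x; y]).
  by apply/setP=> z; rewrite !inE; case: (z =P y); case: (z =P x).
exact: R.
Qed.

Lemma empty_not_forcing : 0 < #|T| -> ~ psd_forcing_set g set0.
Proof.
move=> /card_gt0P [x0 _] F.
have H : forall B, reach set0 B -> B = set0.
  by move=> B; elim=> // B0 u y R IH Fo; have [] := force_adj Fo; rewrite IH inE.
by move: (in_setT x0); rewrite (H _ F) inE.
Qed.

Lemma single_connected s : psd_forcing_set g [set s] -> connected_graph g.
Proof.
move=> F.
have H : forall B, reach [set s] B -> forall z, z \in B -> connect g s z.
  move=> B; elim=> [|B0 u y R IH Fo] z.
    by rewrite in_set1 => /eqP->; apply: connect0.
  rewrite in_setU1 => /orP[/eqP->|]; last exact: IH.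
  have [uB _ guy] := force_adj Fo.
  exact: connect_trans (IH _ uB) (connect1 guy).
move=> x y; apply: connect_trans (H _ F y (in_setT y)).
by rewrite (sym_connect_sym gsym); apply: H F x (in_setT x).
Qed.

Lemma single_acyclic : (forall s, psd_forcing_set g [set s]) -> acyclic_graph g.
Proof.
move=> Fs c; case: c => [|s [|p1 q]] //; case: q => [|a q'] //.
set q := a :: q'.
move=> U _; apply/negP; move: U.
rewrite cons_uniq in_cons negb_or cons_uniq => /andP[/andP[nsp1 nsq] /andP[np1q _]].
rewrite /cycle rcons_cons /= rcons_path => /andP[gsp1 /andP[gp1a /andP[pa gts']]].
have pth : path g p1 q by rewrite /q /= gp1a.
set t := last p1 q.
have gts : g t s by exact: gts'.
have tq : t \in q by rewrite /t /q /= mem_last.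
have ntp1 : t != p1 by apply: contraNneq np1q => <-.
have p1s : p1 \notin [set s] by rewrite in_set1 eq_sym.
pose W := cmp [set s] p1.
have p1W : p1 \in W by apply: cmp_self.
have tW : t \in W.
  rewrite in_cmp p1s /=; apply/andP; split.
    by rewrite in_set1; apply: contraNneq nsq => <-.
  apply/connectP; exists q => //.
  apply: (@sub_in_path _ [pred x | x != s] g).
  - move=> x y xs ys gxy; rewrite /restr /= !in_set1 gxy andbT.
    by apply/andP.
  - apply/allP=> x; rewrite inE => /orP[/eqP->|xq] /=; first by rewrite eq_sym.
    by apply: contraNneq nsq => <-.
  - exact: pth.
have H : forall B, reach [set s] B -> forall z, z \in W -> z \notin B.
  move=> B; elim=> [|B0 u y R IH Fo] z zW.
    by move: zW; rewrite in_cmp => /and3P[].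
  rewrite in_setU1 negb_or (IH _ zW) andbT.
  apply/eqP=> zy; subst z.
  have [uB0 yB0 guy] := force_adj Fo.
  have inC : forall w, w \in W -> w \in cmp B0 y.
    move=> w wW.
    have yw : w \in cmp [set s] y by apply: cmp_trans (cmp_symm zW) wW.
    have hA : forall a0 b0, [pred x | x \in W] a0 -> rs [set s] a0 b0 ->
        [pred x | x \in W] b0 && rs B0 a0 b0.
      move=> a0 b0 /= a0W hab0.
      have b0W : b0 \in W.
        apply: (cmp_trans a0W); move: hab0; rewrite /restr /= => /and3P[ha hb gab0].
        by rewrite in_cmp ha hb /=; apply: connect1; rewrite /restr /= ha hb gab0.
      rewrite b0W /=; move: hab0; rewrite /restr /= => /and3P[_ _ ->].
      by rewrite (IH _ a0W) (IH _ b0W).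
    move: (yw); rewrite in_cmp => /and3P[_ _ c].
    case/andP: (connect_restrict hA zW c) => c' _.
    by rewrite in_cmp yB0 (IH _ wW).
  case: Fo => _ [_ E].
  case: (u =P s) => [us|/eqP nus].
    subst u.
    have h1 : p1 \in [set w in cmp B0 y | g s w] by rewrite inE inC.
    have h2 : t \in [set w in cmp B0 y | g s w] by rewrite inE inC // gsym.
    rewrite E !in_set1 in h1 h2.
    by move/eqP: ntp1; apply; rewrite (eqP h1) (eqP h2).
  have uW : u \in W.
    have ys : y \notin [set s] by move: zW; rewrite in_cmp => /and3P[_ ->].
    have us : u \notin [set s] by rewrite in_set1.
    apply: (cmp_trans zW); rewrite in_cmp ys us /=.
    by apply: connect1; rewrite /restr /= ys us gsym guy.
  by move: uB0; rewrite (negbTE (IH _ uW)).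
by move: (H _ (Fs s) _ p1W); rewrite in_setT.
Qed.
End PSD.

Theorem theorem4p10 (T : finType) (g : rel T) (n : nat)
  (gsym : symmetric g) (girr : irreflexive g) (Tne : 0 < #|T|)
  (noiso : no_isolated g) (hTE : TE_iso_complete g n) :
  graph_iso g (complete_rel n) \/ (is_tree g /\ #|T| = n).
Proof.
have [S0 [FS0 minS0]] := ex_min g.
have mS0 : min_psd_forcing_set g S0 by [].
set k := #|S0| in minS0.
have min_of : forall S : {set T}, psd_forcing_set g S -> #|S| = k -> min_psd_forcing_set g S.
  by move=> S FS cS; split=> // S' FS'; rewrite cS; apply: minS0.
have card_min : forall S : {set T}, min_psd_forcing_set g S -> #|S| = k.
  move=> S [FS mS]; apply/eqP; rewrite eqn_leq mS //; exact: minS0.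
case: hTE => f [finj [fmin [fsurj fadj]]].
have adj : forall S S' : {set T}, min_psd_forcing_set g S -> min_psd_forcing_set g S' ->
    S != S' -> te_adj S S'.
  move=> S S' mS mS' nSS'; have [i fi] := fsurj _ mS; have [j fj] := fsurj _ mS'.
  subst; apply/fadj; apply: contraNneq nSS' => ->; by rewrite eqxx.
have out : forall (S S' : {set T}) c, min_psd_forcing_set g S -> min_psd_forcing_set g S' ->
    c \in S -> c \notin S' -> forall z, z \in S -> z != c -> z \in S'.
  move=> S S' c mS mS' cS cS' z zS nzc.
  have nS : S != S' by apply: contraNneq cS' => <-.
  have [[p Ep] _] := adj _ _ mS mS' nS.
  have : c \in S :\: S' by rewrite in_setD cS cS'.
  rewrite Ep in_set1 => /eqP cp.
  apply/negPn/negP => zS'.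
  have : z \in S :\: S' by rewrite in_setD zS zS'.
  by rewrite Ep in_set1 -cp (negbTE nzc).
have one : forall (S : {set T}) x, #|S| = 1 -> x \in S -> S = [set x].
  move=> S x cS xS; have /cards1P [y Sy] : #|S| == 1 by rewrite cS.
  by move: xS; rewrite Sy in_set1 => /eqP->.
case/card_gt0P: (Tne) => x0 _.
case: (boolP [forall x, forall y, (x != y) ==> g x y]) => [cpl | ncpl].
  have cplg : forall x y, x != y -> g x y.
    by move=> x y nxy; move/forallP: cpl => /(_ x) /forallP /(_ y); rewrite nxy.
  have minC : forall y, min_psd_forcing_set g (~: [set y]).
    move=> y; split; first exact: compl_forcing.
    move=> S' FS'; have := complete_lb cplg FS'.
    have := cardsC S'; rewrite cardsC1; lia.
  have formC : forall S : {set T}, min_psd_forcing_set g S -> exists y, S == ~: [set y].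
    move=> S mS; have cS := card_min _ mS; have cC := card_min _ (minC x0).
    have : #|~: S| == 1.
      by apply/eqP; have := cardsC S; move: cC; rewrite cardsC1; lia.
    case/cards1P => y Ey; exists y; by rewrite -Ey setCK.
  have hex : forall x, exists i, f i == ~: [set x].
    by move=> x; have [i fi] := fsurj _ (minC x); exists i; rewrite fi.
  have hinv : forall i, exists y, f i == ~: [set y] by move=> i; apply: formC.
  pose h x := xchoose (hex x); pose h' i := xchoose (hinv i).
  have hP : forall x, f (h x) = ~: [set x] by move=> x; apply/eqP/(xchooseP (hex x)).
  have h'P : forall i, f i = ~: [set h' i] by move=> i; apply/eqP/(xchooseP (hinv i)).
  have can1 : cancel h h'.
    by move=> x; apply: set1_inj; apply: setC_inj; rewrite -h'P hP.
  have can2 : cancel h' h by move=> i; apply: finj; rewrite hP h'P.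
  left; exists h; split; first by exists h'.
  move=> x y; rewrite /complete_rel (inj_eq (can_inj can1)).
  by case: (x =P y) => [->|/eqP nxy]; [rewrite girr | rewrite cplg].
move/forallPn: ncpl => [x1 /forallPn [y1]]; rewrite negb_imply => /andP[nxy ngxy].
right.
have Ftwo := two_forcing gsym girr noiso nxy ngxy.
have kle : k <= #|T| - 2.
  have := minS0 _ Ftwo; have := cardsC [set x1; y1]; rewrite cards2 nxy; lia.
have kge : 0 < k.
  rewrite lt0n; apply/negP => /eqP k0; apply: (@empty_not_forcing T g Tne).
  by rewrite -(cards0_eq k0).
have k1 : k = 1.
  apply/eqP; rewrite eqn_leq kge andbT leqNgt; apply/negP => k2.
  have [v vS0] : exists v, v \in S0 by apply/card_gt0P.
  have [S2 [FS2 c2 vS2]] := lemma_B gsym girr noiso mS0 vS0.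
  have mS2 := min_of _ FS2 c2.
  have n02 : S0 != S2 by apply: contraNneq vS2 => <-.
  have [[a Ea] [b Eb]] := adj _ _ mS0 mS2 n02.
  have cC : #|S0 :&: S2| = k - 1.
    have := cardsID S2 S0; rewrite Ea cards1 -/k; lia.
  have [c] : exists c, c \in S0 :&: S2 by apply/card_gt0P; rewrite cC; lia.
  rewrite in_setI => /andP[cS0 cS2].
  have [S3 [FS3 c3 cS3]] := lemma_B gsym girr noiso mS0 cS0.
  have mS3 := min_of _ FS3 c3.
  pose U := S0 :|: S2.
  have cU : #|U| = k.+1 by rewrite /U cardsU c2 cC -/k; lia.
  have sU3 : U :\ c \subset S3.
    apply/subsetP=> z; rewrite in_setD1 in_setU => /andP[nzc /orP[zS|zS]].
      exact: (out S0 S3 c mS0 mS3 cS0 cS3).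
    exact: (out S2 S3 c mS2 mS3 cS2 cS3).
  have cUc : #|U :\ c| = k.
    have := cardsD1 c U; rewrite in_setU cS0 /= cU; lia.
  have EU3 : U :\ c = S3.
    by apply/eqP; rewrite eqEcard sU3 c3 cUc leqnn.
  have [x] : exists x, x \in ~: U.
    apply/card_gt0P; have := cardsC U; rewrite cU; lia.
  rewrite in_setC => xU.
  have xS0 : x \notin S0 by apply: contra xU => xS0; rewrite in_setU xS0.
  have [S4 [FS4 c4 xS4]] := lemma_A gsym FS0 xS0.
  have mS4 := min_of _ FS4 c4.
  have xS3 : x \notin S3 by rewrite -EU3 in_setD1 negb_and xU orbT.
  have ncx : c != x by apply: contraNneq xU => <-; rewrite in_setU cS0.
  have cS4 : c \notin S4.
    apply/negP => cS4; have := out S4 S3 x mS4 mS3 xS4 xS3 c cS4 ncx.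
    by rewrite (negbTE cS3).
  have sub4 : x |: (U :\ c) \subset S4.
    apply/subsetP=> z; rewrite in_setU1 => /orP[/eqP->//|].
    rewrite in_setD1 in_setU => /andP[nzc /orP[zS|zS]].
      exact: (out S0 S4 c mS0 mS4 cS0 cS4).
    exact: (out S2 S4 c mS2 mS4 cS2 cS4).
  have := subset_leq_card sub4; rewrite cardsU1 cUc c4 in_setD1 (negbTE xU) andbF /= -/k.
  by rewrite add1n ltnn.
have single_min : forall x, psd_forcing_set g [set x].
  move=> x; case: (boolP (x \in S0)) => xS0.
    by rewrite -(one S0 x) // -/k k1.
  have [S' [FS' c' xS']] := lemma_A gsym FS0 xS0.
  by rewrite -(one S' x) // c' -/k k1.
split.
  split; first exact: (single_connected gsym (single_min x0)).
  exact: single_acyclic.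
have minS1 : forall x, min_psd_forcing_set g [set x].
  by move=> x; apply: min_of; rewrite ?cards1.
have hex : forall x, exists i, f i == [set x].
  by move=> x; have [i fi] := fsurj _ (minS1 x); exists i; rewrite fi.
have hinv : forall i, exists y, f i == [set y].
  move=> i; have := card_min _ (fmin i); rewrite k1 => /eqP /cards1P [y ->].
  by exists y.
pose h x := xchoose (hex x); pose e i := xchoose (hinv i).
have hP : forall x, f (h x) = [set x] by move=> x; apply/eqP/(xchooseP (hex x)).
have eP : forall i, f i = [set e i] by move=> i; apply/eqP/(xchooseP (hinv i)).
have hinj : injective h by move=> x y hxy; apply: set1_inj; rewrite -hP hxy hP.
have einj : injective e by move=> i j eij; apply: finj; rewrite eP eij -eP.
apply/eqP; rewrite eqn_leq.
have := @leq_card _ _ h hinj; have := @leq_card _ _ e einj; rewrite card_ord => -> ->.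
by [].
Qed.
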